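(* Let $m\ge1$, $n\ge1$, $N>2n$, let $\Sigma_0,\dots,\Sigma_n\in\mathbb R^{m\times m}$, and let $\mathbf T_n$ be the $(n+1)m\times(n+1)m$ block-Toeplitz matrix whose $(i,j)$ block ($i,j=0,\dots,n$) is $\Sigma_{i-j}$ if $i\ge j$ and $\Sigma_{j-i}^\top$ if $i<j$. Consider the maximum entropy problem (MEP): minimize $-\log\det\boldsymbol\Sigma$ over symmetric positive definite $mN\times mN$ matrices $\boldsymbol\Sigma$ subject to $E_n^\top\boldsymbol\Sigma E_n=\mathbf T_n$ and $\mathbf U_N^\top\boldsymbol\Sigma\mathbf U_N=\boldsymbol\Sigma$. Let $\boldsymbol\Sigma^o_N$ be a minimizer of (MEP). Then $(\boldsymbol\Sigma^o_N)^{-1}$ is a symmetric block-circulant matrix which is banded of bandwidth $n$. Hence $\boldsymbol\Sigma_N^o$ is the covariance matrix of a stationary reciprocal process of order $n$ on $\mathbb Z_N$.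
   Context: $E_n$ is the $mN\times m(n+1)$ matrix consisting of $N\times(n+1)$ blocks of size $m\times m$ whose $(i,i)$ blocks ($i=1,\dots,n+1$) are $I_m$ and all other blocks are $0$; thus $E_n^\top\boldsymbol\Sigma E_n$ is the upper-left $(n+1)\times(n+1)$ block corner of $\boldsymbol\Sigma$. $\mathbf U_N$ is the $mN\times mN$ block-circulant shift matrix whose $(i,i+1)$ blocks ($i=1,\dots,N-1$) and $(N,1)$ block equal $I_m$ and all other blocks are $0$; a matrix $\boldsymbol\Sigma$ is block-circulant (its $(i,j)$ block depends only on $(i-j)\bmod N$) iff $\mathbf U_N^\top\boldsymbol\Sigma\mathbf U_N=\boldsymbol\Sigma$. A block-circulant matrix is banded of bandwidth $n$ if its $(i,j)$ block is zero whenever the cyclic distance $\min\{(i-j)\bmod N,(j-i)\bmod N\}$ exceeds $n$. A process on $\mathbb Z_N$ is an $m$-dimensional zero-mean second-order process $\{\mathbf y(t)\}_{t=1}^N$ with time indices taken mod $N$ and symmetric block-circulant covariance $\mathbb E\,\mathbf y\mathbf y^\top$ (such a process is called stationary). Writing $\hat{\mathbb E}[\cdot\mid\cdot]$ for orthogonal projection onto the closed linear span of the scalar components of the conditioning variables, subspaces $\mathcal A,\mathcal B$ are conditionally orthogonal given $\mathcal C$ if $(a-\hat{\mathbb E}[a\mid\mathcal C])$ and $(b-\hat{\mathbb E}[b\mid\mathcal C])$ are uncorrelated for all $a\in\mathcal A,b\in\mathcal B$. The process is reciprocal of order $n$ if for every (cyclic) interval $(t_1,t_2)$ the variables $\{\mathbf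 y(t):t\in(t_1,t_2)\}$ are conditionally orthogonal to $\{\mathbf y(s): s\notin(t_1,t_2)\}$ given $\mathbf y(t_1-n+1),\dots,\mathbf y(t_1),\mathbf y(t_2),\dots,\mathbf y(t_2+n-1)$. *)

(* Defs.v *)
From HB Require Import structures.
From mathcomp Require Import all_boot all_order all_algebra.
From mathcomp Require Import reals exp.
Set Implicit Arguments. Unset Strict Implicit. Unset Printing Implicit Defensive.
Import Order.TTheory GRing.Theory Num.Theory.
Local Open Scope ring_scope.

(* Scalar index k : 'I_(m*N) lies in block (time) k %/ m, at position k %% m.
   Blocks / times are numbered 0..N-1 (the paper's 1..N shifted by one). *)

Section Defs.
Variable R : realType.

Definition posdef (k : nat) (A : 'M[R]_k) : Prop :=
  A^T = A /\ forall x : 'cV[R]_k, x != 0 -> 0 < (x^T *m A *m x) 0 0.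

Definition Emat (m n N : nat) : 'M[R]_(m * N, m * n.+1) :=
  \matrix_(k, l) ((nat_of_ord k == nat_of_ord l)%:R).

(* U_N : block-circulant shift, (i,i+1) blocks and (N,1) block = I_m *)
Definition Umat (m N : nat) : 'M[R]_(m * N) :=
  \matrix_(k, l) (((k %% m == l %% m) && (l %/ m == (k %/ m).+1 %% N))%N%:R).

Definition Tmat (m n : nat) (S : nat -> 'M[R]_m) : 'M[R]_(m * n.+1) :=
  \matrix_(k, l)
    (let i := (k %/ m)%N in let j := (l %/ m)%N in
     let a := (k %% m)%N in let b := (l %% m)%N in
     match ltnP a m, ltnP b m with
     | LtnNotGeq ha, LtnNotGeq hb =>
         if (j <= i)%N then S (i - j)%N (Ordinal ha) (Ordinal hb)
         else S (j - i)%N (Ordinal hb) (Ordinal ha)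
     | _, _ => 0
     end).

Definition cdist (N i j : nat) : nat :=
  minn ((i + N - j) %% N) ((j + N - i) %% N).

Definition banded (m N n : nat) (A : 'M[R]_(m * N)) : Prop :=
  forall k l : 'I_(m * N), (n < cdist N (k %/ m) (l %/ m))%N -> A k l = 0.

(* Second-order process y with covariance Sig: the scalar random variable
   c^T y is identified with the coefficient vector c, and E[(c^T y)(d^T y)]
   = c^T Sig d. *)
Definition inner (k : nat) (Sig : 'M[R]_k) (c d : 'cV[R]_k) : R :=
  (c^T *m Sig *m d) 0 0.

(* c lies in the span of the components of y(t), t in P *)
Definition supp (m N : nat) (P : pred nat) (c : 'cV[R]_(m * N)) : Prop :=
  forall k : 'I_(m * N), c k 0 != 0 -> P (k %/ m)%N.

(* conditional orthogonality of span{y(t): t in A}, span{y(t): t in B}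
   given span{y(t) : t in C}; pa, pb are the orthogonal projections of a, b
   onto span C (characterized as elements of span C with residual orthogonal
   to span C). *)
Definition condorth (m N : nat) (Sig : 'M[R]_(m * N)) (A B C : pred nat) : Prop :=
  forall a b pa pb : 'cV[R]_(m * N),
    supp A a -> supp B b -> supp C pa -> supp C pb ->
    (forall c, supp C c -> inner Sig (a - pa) c = 0) ->
    (forall c, supp C c -> inner Sig (b - pb) c = 0) ->
    inner Sig (a - pa) (b - pb) = 0.

Definition in_interval (N t1 t2 : nat) : pred nat :=
  fun t => (t < N)%N && (0 < (t + N - t1) %% N < (t2 + N - t1) %% N)%N.

Definition outside_interval (N t1 t2 : nat) : pred nat :=
  fun t => (t < N)%N && ~~ in_interval N t1 t2 t.

(* t1-n+1, ..., t1, t2, ..., t2+n-1 (mod N) *)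
Definition boundary (N n t1 t2 : nat) : pred nat :=
  fun t => (t < N)%N && (((t1 + N - t) %% N < n) || ((t + N - t2) %% N < n))%N.

Definition reciprocal (m N n : nat) (Sig : 'M[R]_(m * N)) : Prop :=
  forall t1 t2 : nat, (t1 < N)%N -> (t2 < N)%N ->
    condorth Sig (in_interval N t1 t2) (outside_interval N t1 t2)
      (boundary N n t1 t2).

Definition MEP_feasible (m n N : nat) (S : nat -> 'M[R]_m)
    (Sig : 'M[R]_(m * N)) : Prop :=
  posdef Sig /\ (Emat m n N)^T *m Sig *m Emat m n N = Tmat n S /\
  (Umat m N)^T *m Sig *m Umat m N = Sig.

Definition MEP_minimizer (m n N : nat) (S : nat -> 'M[R]_m)
    (Sig : 'M[R]_(m * N)) : Prop :=
  MEP_feasible n S Sig /\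
  forall Sig' : 'M[R]_(m * N), MEP_feasible n S Sig' ->
    - ln (\det Sig) <= - ln (\det Sig').

End Defs.

Arguments posdef {R k} A.
Arguments Emat {R} m n N.
Arguments Umat {R} m N.
Arguments Tmat {R m} n S.
Arguments banded {R} m N n A.
Arguments inner {R k} Sig c d.
Arguments supp {R m N} P c.
Arguments condorth {R m N} Sig A B C.
Arguments reciprocal {R} m N n Sig.
Arguments MEP_feasible {R} m n N S Sig.
Arguments MEP_minimizer {R} m n N S Sig.

(* Main.v *)
Require Import Defs.
From HB Require Import structures.
From mathcomp Require Import all_boot all_order all_algebra.
From mathcomp Require Import reals exp.
From mathcomp Require Import fingroup perm ring lra zify.
Import Order.TTheory GRing.Theory Num.Theory.
Local Open Scope ring_scope.

Module PartA.
Set Implicit Arguments. Unset Strict Implicit. Unset Printing Implicit Defensive.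
Local Open Scope ring_scope.

Section LA.
Variable R : realType.

Definition bf (k : nat) (A : 'M[R]_k) (x y : 'cV[R]_k) : R := (x^T *m A *m y) 0 0.

Lemma bfE k (A : 'M[R]_k) x y :
  bf A x y = \sum_i \sum_j x i 0 * A i j * y j 0.
Proof.
rewrite /bf mxE exchange_big /=; apply: eq_bigr => j _.
rewrite mxE mulr_suml; apply: eq_bigr => i _; by rewrite !mxE.
Qed.

Lemma bf_sym k (A : 'M[R]_k) x y : A^T = A -> bf A x y = bf A y x.
Proof.
move=> sA; have h : (x^T *m A *m y)^T = y^T *m A *m x.
  by rewrite !trmx_mul trmxK sA mulmxA.
by rewrite /bf -h [RHS]mxE.
Qed.

Lemma bfDl k (A : 'M[R]_k) x y z : bf A (x + y) z = bf A x z + bf A y z.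
Proof. by rewrite /bf linearD /= !mulmxDl mxE. Qed.
Lemma bfDr k (A : 'M[R]_k) x y z : bf A z (x + y) = bf A z x + bf A z y.
Proof. by rewrite /bf mulmxDr mxE. Qed.
Lemma bfZl k (A : 'M[R]_k) a x z : bf A (a *: x) z = a * bf A x z.
Proof. by rewrite /bf linearZ /= -!scalemxAl mxE. Qed.
Lemma bfZr k (A : 'M[R]_k) a x z : bf A z (a *: x) = a * bf A z x.
Proof. by rewrite /bf -!scalemxAr mxE. Qed.
Lemma bfNl k (A : 'M[R]_k) x z : bf A (- x) z = - bf A x z.
Proof. by rewrite -scaleN1r bfZl mulN1r. Qed.
Lemma bfNr k (A : 'M[R]_k) x z : bf A z (- x) = - bf A z x.
Proof. by rewrite -scaleN1r bfZr mulN1r. Qed.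
Lemma bfAl k (A B : 'M[R]_k) x z : bf (A + B) x z = bf A x z + bf B x z.
Proof. by rewrite /bf mulmxDr mulmxDl mxE. Qed.
Lemma bfZA k (A : 'M[R]_k) a x z : bf (a *: A) x z = a * bf A x z.
Proof. by rewrite /bf -scalemxAr -scalemxAl mxE. Qed.

Lemma cauchy_schwarz k (A : 'M[R]_k) u v : A^T = A ->
  (forall x, 0 <= bf A x x) -> 0 < bf A v v ->
  bf A u v ^+ 2 <= bf A u u * bf A v v.
Proof.
move=> sA pA vp; set s := bf A u v / bf A v v.
have := pA (u - s *: v).
rewrite bfDl !bfDr !bfNl !bfNr !bfZl !bfZr (@bf_sym _ A v u sA) => h.
have e : s * bf A v v = bf A u v by rewrite /s mulfVK // gt_eqF.
rewrite -subr_ge0.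
have -> : bf A u u * bf A v v - bf A u v ^+ 2 =
  bf A v v * (bf A u u - (s * bf A u v) - (s * bf A u v - s * (s * bf A v v))).
  rewrite e /s; field; by rewrite gt_eqF.
apply: mulr_ge0; first exact: ltW.
apply: le_trans h _; rewrite le_eqVlt; apply/orP; left; apply/eqP; ring.
Qed.

Definition nrm2 k (x : 'cV[R]_k) := bf 1%:M x x.

Lemma nrm2E k (x : 'cV[R]_k) : nrm2 x = \sum_i x i 0 ^+ 2.
Proof.
rewrite /nrm2 bfE; apply: eq_bigr => i _.
rewrite (bigD1 i) //= big1 ?addr0; first by rewrite !mxE eqxx mulr1 expr2.
by move=> j ji; rewrite !mxE eq_sym (negPf ji) mulr0 mul0r.
Qed.

Lemma nrm2_ge k (x : 'cV[R]_k) i : x i 0 ^+ 2 <= nrm2 x.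
Proof.
rewrite nrm2E (bigD1 i) //= lerDl; apply: sumr_ge0 => j _; exact: sqr_ge0.
Qed.

Lemma nrm2_gt0 k (x : 'cV[R]_k) : x != 0 -> 0 < nrm2 x.
Proof.
move=> nx; have [i xi] : exists i, x i 0 != 0.
  apply/existsP; apply: contraNT nx; rewrite negb_exists => /forallP h.
  apply/eqP/matrixP => i j; rewrite (ord1 j) mxE; exact/eqP/negbNE/h.
apply: (lt_le_trans _ (nrm2_ge x i)); by rewrite exprn_even_gt0 // xi orbT.
Qed.

Lemma bf_bound k (A : 'M[R]_k) x :
  `|bf A x x| <= (\sum_i \sum_j `|A i j|) * nrm2 x.
Proof.
rewrite bfE mulr_suml; apply: (le_trans (ler_norm_sum _ _ _)).
apply: ler_sum => i _; rewrite mulr_suml.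
apply: (le_trans (ler_norm_sum _ _ _)); apply: ler_sum => j _.
have hi := nrm2_ge x i; have hj := nrm2_ge x j.
rewrite !normrM [`|x i 0| * _]mulrC -mulrA ler_wpM2l //.
have h1 : `|x i 0| ^+ 2 <= nrm2 x by rewrite real_normK ?num_real.
have h2 : `|x j 0| ^+ 2 <= nrm2 x by rewrite real_normK ?num_real.
have := normr_ge0 (x i 0); have := normr_ge0 (x j 0); nra.
Qed.

Lemma posdef_unit k (A : 'M[R]_k) : posdef A -> A \in unitmx.
Proof.
move=> [sA pA]; rewrite unitmxE unitfE; apply/negP => /det0P [v nv vA].
have : v^T != 0 by apply: contra nv => /eqP h; rewrite -(trmxK v) h linear0.
move=> /pA; by rewrite trmxK vA mul0mx mxE ltxx.
Qed.

Lemma posdef_perturb k (A D : 'M[R]_k) : posdef A -> D^T = D ->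
  exists2 d : R, 0 < d & forall t, `|t| < d -> posdef (A + t *: D).
Proof.
move=> [sA pA] sD.
have uA : A \in unitmx by apply: posdef_unit.
set K := invmx A.
have sK : K^T = K by rewrite /K trmx_inv sA.
set CA := \sum_i \sum_j `|K i j|; set CD := \sum_i \sum_j `|D i j|.
have CA0 : 0 <= CA by apply: sumr_ge0 => i _; apply: sumr_ge0.
have CD0 : 0 <= CD by apply: sumr_ge0 => i _; apply: sumr_ge0.
have pA' : forall x, 0 <= bf A x x.
  move=> x; have [->|nx] := eqVneq x 0; first by rewrite /bf mulmx0 mxE.
  exact/ltW/pA.
have key : forall x, x != 0 -> nrm2 x <= bf A x x * CA.
  move=> x nx; have n0 := nrm2_gt0 nx.
  have e1 : bf A x (K *m x) = nrm2 x.
    by rewrite /nrm2 /bf -mulmxA (mulmxA A) mulmxV // mul1mx mulmx1.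
  have e2 : bf A (K *m x) (K *m x) = bf K x x.
    rewrite /bf trmx_mul sK -!mulmxA (mulmxA A) mulmxV // mul1mx.
    by rewrite mulmxA.
  have hK : bf K x x <= CA * nrm2 x.
    exact: le_trans (ler_norm _) (bf_bound K x).
  have pK : 0 < bf A (K *m x) (K *m x).
    apply: pA; apply: contra nx => /eqP h.
    by rewrite -(mul1mx x) -(mulmxV uA) -mulmxA h mulmx0.
  have := cauchy_schwarz x sA pA' pK; rewrite e1 e2 => cs.
  have : nrm2 x ^+ 2 <= bf A x x * (CA * nrm2 x).
    apply: le_trans cs _; apply: ler_wpM2l => //.
  by rewrite expr2 mulrA ler_pM2r // mulrC.
exists (CA * CD + 1)^-1; first by rewrite invr_gt0; nra.
move=> t ht; split.
  by rewrite linearD /= linearZ /= sA sD.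
move=> x nx; have := key x nx; have n0 := nrm2_gt0 nx.
have hA := pA x nx.
have hD := bf_bound D x; rewrite -/CD in hD.
rewrite -/(bf (A + t *: D) x x) bfAl bfZA => kx.
have ht' : `|t| * (CA * CD + 1) < 1.
  by rewrite -(ltr_pdivlMr _ _ (ltr_pwDr ltr01 (mulr_ge0 CA0 CD0))) div1r.
have hd2 : - (CD * nrm2 x) <= bf D x x by move: hD; rewrite ler_norml => /andP[].
have hd3 : bf D x x <= CD * nrm2 x by exact: le_trans (ler_norm _) hD.
have ta : -`|t| <= t <= `|t| by rewrite -ler_norml.
case/andP: ta => ta1 ta2.
have := normr_ge0 t.
have : `|t * bf D x x| <= `|t| * (CD * nrm2 x).
  by rewrite normrM ler_wpM2l.
move=> h1 h0.
have h2 : - (`|t| * (CD * nrm2 x)) <= t * bf D x x.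
  by move: h1; rewrite ler_norml => /andP[].
nra.
Qed.

End LA.

End PartA.
Import PartA.

Module PartB.
Set Implicit Arguments. Unset Strict Implicit. Unset Printing Implicit Defensive.
Local Open Scope ring_scope.

Section Poly.
Variable R : realType.

Lemma char_horner d (A : 'M[R]_d) x : (char_poly A).[x] = \det (x%:M - A).
Proof.
have h : map_mx (horner_eval x) (char_poly_mx A) = x%:M - A.
  apply/matrixP => i j; rewrite !mxE /horner_eval.
  by rewrite hornerD hornerN hornerMn hornerX hornerC.
by rewrite /char_poly -h det_map_mx.
Qed.

Definition detpoly d (M : 'M[R]_d) : {poly R} :=
  \poly_(i < d.+1) (char_poly (- M))`_(d - i).

Lemma char_lead d (M : 'M[R]_d) : (char_poly M)`_d = 1.
Proof.
have := char_poly_monic M; rewrite monicE lead_coefE size_char_poly /=.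
by move/eqP.
Qed.

Lemma detpolyE d (M : 'M[R]_d) t : (detpoly M).[t] = \det (1%:M + t *: M).
Proof.
set c := char_poly (- M).
rewrite (horner_coef_wide t (size_poly _ _)).
under eq_bigr do rewrite coef_poly ltn_ord.
have [->|t0] := eqVneq t 0.
  rewrite scale0r addr0 det1 big_ord_recl subn0 expr0 mulr1 big1 ?addr0.
    exact: char_lead.
  by move=> i _; rewrite expr0n /= mulr0.
have -> : 1%:M + t *: M = t *: (t^-1%:M - (- M)).
  by rewrite opprK scalerDr scale_scalar_mx mulfV.
rewrite detZ -char_horner (horner_coef_wide _ (eq_leq (size_char_poly _))).
rewrite mulr_sumr (reindex_inj rev_ord_inj) /=; apply: eq_bigr => i _.
have hi : (i <= d)%N by rewrite -ltnS.
rewrite subKn // mulrCA; congr (_ * _).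
rewrite subSS exprVn -[in t ^+ d](subnK hi) exprD mulfK //; exact: expf_neq0.
Qed.

Lemma detpoly0 d (M : 'M[R]_d) : (detpoly M)`_0 = 1.
Proof. by rewrite coef_poly /= subn0 char_lead. Qed.

Lemma detpoly1 d (M : 'M[R]_d) : (0 < d)%N -> (detpoly M)`_1 = \tr M.
Proof.
move=> d0; rewrite coef_poly ltnS d0 subn1 char_poly_trace //.
by rewrite raddfN opprK.
Qed.

Lemma poly_expand (p : {poly R}) : exists2 B : R, 0 < B &
  forall t, `|t| <= 1 -> `|p.[t] - p`_0 - p`_1 * t| <= B * t ^+ 2.
Proof.
exists (\sum_(i < size p) `|p`_i.+2| + 1).
  by rewrite ltr_pwDr // sumr_ge0.
move=> t t1.
rewrite (@horner_coef_wide _ (size p).+2) ?leqW //.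
rewrite !big_ord_recl /= expr0 mulr1 expr1.
have -> : p`_0 + (p`_1 * t + \sum_(i < size p) p`_(bump 0 (bump 0 i)) * t ^+ bump 0 (bump 0 i)) - p`_0 - p`_1 * t
   = t ^+ 2 * \sum_(i < size p) p`_i.+2 * t ^+ i.
  rewrite mulr_sumr.
  have -> : \sum_(i < size p) p`_(bump 0 (bump 0 i)) * t ^+ bump 0 (bump 0 i) =
            \sum_(i < size p) t ^+ 2 * (p`_i.+2 * t ^+ i).
    apply: eq_bigr => i _; rewrite /bump /=.
    by rewrite !exprS expr0 mulr1; ring.
  ring.
rewrite normrM normrX real_normK ?num_real // mulrC ler_wpM2r ?sqr_ge0 //.
apply: le_trans (ler_norm_sum _ _ _) _.
apply: (le_trans (_ : _ <= \sum_(i < size p) `|p`_i.+2|)); last by rewrite lerDl. apply: ler_sum => i _.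
rewrite normrM ler_piMr // normrX exprn_ile1 //.
Qed.

Lemma posdef_det_gt0 d (A : 'M[R]_d) : posdef A -> 0 < \det A.
Proof.
move=> pA.
have nz : \det A != 0 by have := posdef_unit pA; rewrite unitmxE unitfE.
rewrite lt_def nz /=; rewrite leNgt; apply/negP => dneg.
have [x /andP[x0 x1] rx] : exists2 x, 0 <= x <= 1 & root (- detpoly (A - 1%:M)) x.
  apply: poly_ivt; first exact: ler01.
  rewrite !hornerN !detpolyE scale0r addr0 det1 scale1r addrC subrK.
  by rewrite oppr_le0 ler01 oppr_ge0 ltW.
move: rx; rewrite /root hornerN oppr_eq0 detpolyE => /eqP h.
have : posdef (1%:M + x *: (A - 1%:M)).
  case: pA => sA pA; split.
    by rewrite linearD /= linearZ /= linearB /= sA trmx1.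
  move=> v nv.
  rewrite -/(bf _ v v) bfAl bfZA -[A - 1%:M]/(A + - 1%:M) bfAl.
  have -> : bf (- 1%:M) v v = - nrm2 v by rewrite /bf /nrm2 mulmxN mulNmx mxE.
  have := pA v nv; have := nrm2_gt0 nv; rewrite -/(bf A v v).
  move=> h1 h2; rewrite -/(nrm2 v); nra.
move/posdef_unit; by rewrite unitmxE unitfE h eqxx.
Qed.

End Poly.

End PartB.
Import PartB.

Module PartC.
Set Implicit Arguments. Unset Strict Implicit. Unset Printing Implicit Defensive.
Local Open Scope ring_scope.

Section Opt.
Variable R : realType.

Lemma opt_trace k (S D : 'M[R]_k) (d : R) : (0 < k)%N -> posdef S -> 0 < d ->
  (forall t, `|t| < d -> \det (S + t *: D) <= \det S) ->
  \tr (invmx S *m D) = 0.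
Proof.
move=> k0 pS d0 hopt.
have uS := posdef_unit pS.
have dS := posdef_det_gt0 pS.
set M := invmx S *m D; set p := detpoly M.
have hp : forall t, `|t| < d -> p.[t] <= 1.
  move=> t ht; have := hopt t ht.
  have -> : S + t *: D = S *m (1%:M + t *: M).
    by rewrite mulmxDr mulmx1 -scalemxAr /M mulmxA mulmxV // mul1mx.
  rewrite det_mulmx -detpolyE -/p => h.
  by rewrite -(ler_pM2l dS) mulr1.
have [B B0 hB] := poly_expand p.
rewrite /p detpoly0 (detpoly1 _ k0) -/M in hB.
set a := \tr M in hB *.
have [d1 [d1p d1d d11]] : exists d1 : R, [/\ 0 < d1, d1 <= d & d1 <= 1].
  have [hd|hd] := lerP d 1; first by exists d.
  by exists 1; split => //; apply: ltW.
have [//|anz] := eqVneq a 0; exfalso.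
set P := 2 * (`|a| + 1) * (B + 1).
have na := normr_ge0 a.
have P0 : 0 < P by rewrite /P; nra.
set e := d1 / P.
have e0 : 0 < e by rewrite /e divr_gt0.
have eP : e * P = d1 by rewrite /e mulfVK // gt_eqF.
have hae : `|a| * e < d1.
  rewrite -eP; have : `|a| < P by rewrite /P; nra.
  nra.
have hBe : B * e < 1.
  have : B + 1 <= P by rewrite /P; nra.
  nra.
set t := a * e.
have ht : `|t| < d1 by rewrite /t normrM (gtr0_norm e0).
have := hp t (lt_le_trans ht d1d).
have := hB t (ltW (lt_le_trans ht d11)).
have a2 : 0 < a ^+ 2 by rewrite exprn_even_gt0 // anz orbT.
rewrite ler_norml => /andP[h1 h2] h3.
have : a * t <= B * t ^+ 2 by lra.
rewrite /t => h4.
have h5 : a ^+ 2 * e * (1 - B * e) <= 0.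
  move: h4; rewrite !expr2; nra.
have : 0 < a ^+ 2 * e * (1 - B * e).
  by rewrite mulr_gt0 // ?subr_gt0 // mulr_gt0.
move=> h6; have := lt_le_trans h6 h5; by rewrite ltxx.
Qed.

End Opt.

End PartC.
Import PartC.

Module PartD.
Set Implicit Arguments. Unset Strict Implicit. Unset Printing Implicit Defensive.
Local Open Scope ring_scope.

Local Close Scope ring_scope.
Lemma modS2 (x N : nat) : (x < N + N)%N ->
  ((x < N)%N /\ x %% N = x) \/ ((N <= x)%N /\ x %% N = (x - N)%N).
Proof.
move=> h; case: (ltnP x N) => hx; first by left; rewrite modn_small.
right; split => //; rewrite -{1}(subnK hx) modnDr modn_small //.
lia.
Qed.

Section Idx.
Variables m N : nat.
Hypotheses (hm : (0 < m)%N) (hN : (0 < N)%N).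

Lemma blk_lt (k : 'I_(m * N)) : (k %/ m < N)%N.
Proof. rewrite ltn_divLR //; have := ltn_ord k; lia. Qed.

Lemma res_lt (k : nat) : (k %% m < m)%N.
Proof. by rewrite ltn_pmod. Qed.

Lemma divmodD b r : (r < m)%N -> (b * m + r) %/ m = b /\ (b * m + r) %% m = r.
Proof.
move=> hr; rewrite divnMDl // modnMDl divn_small // addn0 modn_small //.
Qed.

Lemma ord_eq (k l : 'I_(m * N)) : k %/ m = l %/ m -> k %% m = l %% m -> k = l.
Proof.
move=> h1 h2; apply: val_inj => /=.
by rewrite (divn_eq k m) (divn_eq l m) h1 h2.
Qed.

Lemma idx_lt b r : (b < N)%N -> (r < m)%N -> (b * m + r < m * N)%N.
Proof. move=> hb hr; nia. Qed.

Definition sh (k : 'I_(m * N)) : 'I_(m * N) :=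
  Ordinal (idx_lt (ltn_pmod (k %/ m).+1 hN) (res_lt k)).

Lemma blk_sh k : sh k %/ m = (k %/ m).+1 %% N.
Proof. by case: (divmodD ((k %/ m).+1 %% N) (res_lt k)). Qed.
Lemma res_sh k : sh k %% m = k %% m.
Proof. by case: (divmodD ((k %/ m).+1 %% N) (res_lt k)). Qed.

Lemma succmod_inj a b : (a < N)%N -> (b < N)%N -> a.+1 %% N = b.+1 %% N -> a = b.
Proof.
move=> ha hb.
case: (@modS2 a.+1 N ltac:(lia)) => [[? ->]|[? ->]];
case: (@modS2 b.+1 N ltac:(lia)) => [[? ->]|[? ->]]; lia.
Qed.

Lemma sh_inj : injective sh.
Proof.
move=> k l h; apply: ord_eq; last by rewrite -res_sh h res_sh.
apply: succmod_inj; rewrite ?blk_lt // -!blk_sh h //.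
Qed.

Definition sperm : {perm 'I_(m * N)} := perm sh_inj.
Local Open Scope ring_scope.
Variable R : realType.

Lemma Umat_perm : @Umat R m N = perm_mx sperm.
Proof.
apply/matrixP => k l.
have e : (sh k == l) = ((k %% m == l %% m)%N && (l %/ m == (k %/ m).+1 %% N)%N).
  apply/idP/idP; last first.
    case/andP => /eqP e1 /eqP e2; apply/eqP; apply: ord_eq.
      by rewrite blk_sh e2.
    by rewrite res_sh.
  by move/eqP <-; rewrite blk_sh res_sh !eqxx.
by rewrite !mxE permE e.
Qed.

Local Notation U := (perm_mx sperm : 'M[R]_(m * N)).

Lemma conj_entry (A : 'M[R]_(m * N)) p q :
  (U^T *m A *m U) p q = A ((sperm^-1)%g p) ((sperm^-1)%g q).
Proof.
rewrite tr_perm_mx -row_permE -[sperm]invgK -col_permE invgK.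
by rewrite !mxE.
Qed.

Lemma sh_sperm p : sh p = sperm p. Proof. by rewrite permE. Qed.

Lemma circ_of (A : 'M[R]_(m * N)) : U^T *m A *m U = A ->
  forall p q, A (sh p) (sh q) = A p q.
Proof.
move=> h p q; rewrite -{1}h conj_entry !sh_sperm !permK //.
Qed.

Lemma circ_to (A : 'M[R]_(m * N)) : (forall p q, A (sh p) (sh q) = A p q) ->
  U^T *m A *m U = A.
Proof.
move=> h; apply/matrixP => p q; rewrite conj_entry -h !sh_sperm !permKV //.
Qed.

Lemma UtU : U^T *m U = 1%:M.
Proof. by rewrite tr_perm_mx -perm_mxM mulVg perm_mx1. Qed.
Lemma UUt : U *m U^T = 1%:M.
Proof. by rewrite tr_perm_mx -perm_mxM mulgV perm_mx1. Qed.

Lemma circ_inv (S : 'M[R]_(m * N)) : S \in unitmx -> U^T *m S *m U = S ->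
  U^T *m invmx S *m U = invmx S.
Proof.
move=> uS h.
have e : (U^T *m invmx S *m U) *m S = 1%:M.
  rewrite -{2}h !mulmxA -(mulmxA _ U) UUt mulmx1 -(mulmxA _ (invmx S)).
  by rewrite mulVmx // mulmx1 UtU.
by rewrite -[LHS]mulmx1 -(mulmxV uS) mulmxA e mul1mx.
Qed.

Lemma iter_blk r p : (iter r sh p %/ m = ((p %/ m) + r) %% N)%N /\ (iter r sh p %% m = p %% m)%N.
Proof.
elim: r => [|r [IH1 IH2]].
  by rewrite /= addn0 modn_small // blk_lt.
rewrite iterS blk_sh res_sh IH1 IH2; split => //. by rewrite -addn1 modnDml addn1 addnS.
Qed.

Lemma circ_iter (A : 'M[R]_(m * N)) : (forall p q, A (sh p) (sh q) = A p q) ->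
  forall r p q, A (iter r sh p) (iter r sh q) = A p q.
Proof. by move=> h; elim=> [|r IH] p q //=; rewrite h IH. Qed.

Definition lag (p q : nat) := ((q + N - p) %% N)%N.

Lemma modfact1 a b : (a < N)%N -> (b < N)%N -> ((a + (b + N - a) %% N) %% N = b)%N.
Proof.
move=> ha hb; rewrite modnDmr.
have -> : (a + (b + N - a) = b + N)%N by lia.
by rewrite modnDr modn_small.
Qed.

Lemma modfact2 a b c d : (a < N)%N -> (b < N)%N -> (c < N)%N -> (d < N)%N ->
  ((b + N - a) %% N = (d + N - c) %% N)%N ->
  ((b + (c + N - a) %% N) %% N = d)%N.
Proof.
move=> ha hb hc hd el; rewrite modnDmr.
have -> : (b + (c + N - a) = (b + N - a) + c)%N by lia.
rewrite -modnDml el modnDml.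
have -> : (d + N - c + c = d + N)%N by lia.
by rewrite modnDr modn_small.
Qed.

Lemma orbit_reach (p q k l : 'I_(m * N)) :
  (p %% m = k %% m)%N -> (q %% m = l %% m)%N -> lag (p %/ m)%N (q %/ m)%N = lag (k %/ m)%N (l %/ m)%N ->
  exists r, iter r sh p = k /\ iter r sh q = l.
Proof.
move=> ep eq el; exists ((k %/ m + N - p %/ m) %% N)%N.
have bp := blk_lt p; have bk := blk_lt k; have bq := blk_lt q; have bl := blk_lt l.
case: (iter_blk ((k %/ m + N - p %/ m) %% N) p) => h1 h2.
case: (iter_blk ((k %/ m + N - p %/ m) %% N) q) => h3 h4.
split; apply: ord_eq; rewrite ?h2 ?h4 //.
  by rewrite h1 modfact1.
by rewrite h3 (modfact2 bp bq bk bl).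
Qed.

Lemma circ_eq (A : 'M[R]_(m * N)) : (forall p q, A (sh p) (sh q) = A p q) ->
  forall p q k l : 'I_(m * N),
  (p %% m = k %% m)%N -> (q %% m = l %% m)%N -> lag (p %/ m)%N (q %/ m)%N = lag (k %/ m)%N (l %/ m)%N ->
  A p q = A k l.
Proof.
move=> h p q k l e1 e2 e3; have [r [<- <-]] := orbit_reach e1 e2 e3.
by rewrite circ_iter.
Qed.

Lemma lag_alt a b : (a < N)%N -> (b < N)%N ->
  lag a b = if (a <= b)%N then (b - a)%N else (b + N - a)%N.
Proof.
move=> ha hb; rewrite /lag.
case: (@modS2 (b + N - a) N ltac:(lia)) => [[? ->]|[? ->]]; case: leqP; lia.
Qed.

Lemma lag_succ a b : (a < N)%N -> (b < N)%N -> lag (a.+1 %% N) (b.+1 %% N) = lag a b.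
Proof.
move=> ha hb; rewrite !lag_alt ?ltn_pmod //.
case: (@modS2 a.+1 N ltac:(lia)) => [[? ->]|[? ->]];
case: (@modS2 b.+1 N ltac:(lia)) => [[? ->]|[? ->]];
repeat (case: ifPn => ?); lia.
Qed.

Definition Pr (k l p q : 'I_(m * N)) : bool :=
  [&& (p %% m == k %% m)%N, (q %% m == l %% m)%N &
      lag (p %/ m)%N (q %/ m)%N == lag (k %/ m)%N (l %/ m)%N].

Definition Dm (k l : 'I_(m * N)) : 'M[R]_(m * N) :=
  \matrix_(p, q) ((Pr k l p q || Pr k l q p)%:R).

Lemma Dm_sym k l : (Dm k l)^T = Dm k l.
Proof. by apply/matrixP => p q; rewrite !mxE orbC. Qed.

Lemma Pr_sh k l p q : Pr k l (sh p) (sh q) = Pr k l p q.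
Proof. by rewrite /Pr !res_sh !blk_sh lag_succ ?blk_lt. Qed.

Lemma Dm_circ k l : U^T *m Dm k l *m U = Dm k l.
Proof. by apply: circ_to => p q; rewrite !mxE !Pr_sh. Qed.

Lemma Pr_eq (A : 'M[R]_(m * N)) k l p q : (forall p q, A (sh p) (sh q) = A p q) ->
  Pr k l p q -> A p q = A k l.
Proof.
move=> h /and3P[/eqP e1 /eqP e2 /eqP e3]; exact: circ_eq.
Qed.

Lemma trace_Dm (K : 'M[R]_(m * N)) k l : K^T = K ->
  (forall p q, K (sh p) (sh q) = K p q) ->
  \tr (K *m Dm k l) = K k l * \sum_p \sum_q Dm k l q p.
Proof.
move=> sK hK; rewrite /mxtrace mulr_sumr; apply: eq_bigr => p _.
rewrite mxE mulr_sumr; apply: eq_bigr => q _.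
rewrite [Dm k l q p]mxE.
case: (boolP (Pr k l q p)) => h1 /=.
  have e := Pr_eq hK h1.
  by rewrite -e -{1}sK mxE.
case: (boolP (Pr k l p q)) => h2 /=; last by rewrite !mulr0.
by rewrite (Pr_eq hK h2).
Qed.

Lemma sum_Dm_gt0 k l : 0 < \sum_p \sum_q Dm k l q p.
Proof.
have ge0 : forall p q, 0 <= Dm k l p q by move=> p q; rewrite mxE ler0n.
rewrite (bigD1 l) //= (bigD1 k) //=.
have -> : Dm k l k l = 1 by rewrite mxE /Pr !eqxx.
apply: (lt_le_trans ltr01); rewrite -addrA lerDl.
apply: addr_ge0; first by apply: sumr_ge0 => q _; apply: ge0.
by apply: sumr_ge0 => p _; apply: sumr_ge0 => q _; apply: ge0.
Qed.

Lemma far a b c d n : (a <= n)%N -> (b <= n)%N -> (c < N)%N -> (d < N)%N ->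
  (2 * n < N)%N -> (n < cdist N c d)%N -> lag a b != lag c d.
Proof.
move=> ha hb hc hd h2 hcd.
have e : cdist N c d = minn (lag d c) (lag c d) by [].
rewrite e in hcd; move: hcd.
rewrite !lag_alt //; try lia.
repeat (case: ifPn => ?); lia.
Qed.

Section Corner.
Variable n : nat.
Hypothesis hnN : (n < N)%N.

Lemma wid_lt (i : 'I_(m * n.+1)) : (i < m * N)%N.
Proof. apply: (leq_trans (ltn_ord i)); by rewrite leq_pmul2l. Qed.
Definition wid (i : 'I_(m * n.+1)) : 'I_(m * N) := Ordinal (wid_lt i).

Lemma Emat_conj (A : 'M[R]_(m * N)) i j :
  ((Emat m n N)^T *m A *m Emat m n N) i j = A (wid i) (wid j).
Proof.
rewrite mxE (bigD1 (wid j)) //= big1 ?addr0.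
  rewrite !mxE eqxx mulr1 (bigD1 (wid i)) //= big1 ?addr0.
    by rewrite !mxE eqxx mul1r.
  move=> p hp; rewrite !mxE.
  have -> : (nat_of_ord p == nat_of_ord i) = false.
    by apply/negbTE; apply: contra hp => /eqP h; apply/eqP/val_inj.
  by rewrite mul0r.
move=> q hq; rewrite [Emat _ _ _ q j]mxE.
have -> : (nat_of_ord q == nat_of_ord j) = false.
  by apply/negbTE; apply: contra hq => /eqP h; apply/eqP/val_inj.
by rewrite mulr0.
Qed.

Lemma blk_wid i : ((wid i) %/ m <= n)%N.
Proof. rewrite -ltnS ltn_divLR // /=; move: (nat_of_ord i) (ltn_ord i) => x; lia. Qed.

Lemma Dm_corner (k l : 'I_(m * N)) : (2 * n < N)%N -> (n < cdist N (k %/ m) (l %/ m))%N ->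
  (Emat m n N)^T *m Dm k l *m Emat m n N = 0.
Proof.
move=> h2 hc; apply/matrixP => i j; rewrite Emat_conj !mxE.
have f1 := far (blk_wid i) (blk_wid j) (blk_lt k) (blk_lt l) h2 hc.
have f2 := far (blk_wid j) (blk_wid i) (blk_lt k) (blk_lt l) h2 hc.
rewrite /Pr (negbTE f1) (negbTE f2) !andbF //.
Qed.
End Corner.

End Idx.

End PartD.
Import PartD.

Module PartE.
Set Implicit Arguments. Unset Strict Implicit. Unset Printing Implicit Defensive.
Local Open Scope ring_scope.

Lemma lag_lt N a b : (0 < N)%N -> (lag N a b < N)%N.
Proof. by move=> hN; rewrite /lag ltn_pmod. Qed.

Lemma lag_shift N a b c : (0 < N)%N -> (a < N)%N -> (b < N)%N -> (c < N)%N ->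
  lag N a b = lag N (lag N c a) (lag N c b).
Proof.
move=> hN ha hb hc.
have E1 := @lag_alt 1 N erefl hN c a hc ha.
have E2 := @lag_alt 1 N erefl hN c b hc hb.
have E3 := @lag_alt 1 N erefl hN a b ha hb.
have E4 := @lag_alt 1 N erefl hN (lag N c a) (lag N c b) (lag_lt c a hN) (lag_lt c b hN).
rewrite E3 E4; move: E1 E2; move: (lag N c a) (lag N c b) => u v.
repeat (case: ifPn => ?); lia.
Qed.

Lemma geo N n t1 t2 x y : (0 < N)%N -> (1 <= n)%N -> (t1 < N)%N -> (t2 < N)%N ->
  (x < N)%N -> (y < N)%N ->
  in_interval N t1 t2 x -> ~~ in_interval N t1 t2 y -> ~~ boundary N n t1 t2 y ->
  (n < cdist N x y)%N.
Proof.
move=> hN hn h1 h2 hx hy.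
rewrite /in_interval /boundary /cdist hx hy /=.
have e1 : ((x + N - t1) %% N)%N = lag N t1 x by [].
have e2 : ((t2 + N - t1) %% N)%N = lag N t1 t2 by [].
have e3 : ((y + N - t1) %% N)%N = lag N t1 y by [].
have e4 : ((t1 + N - y) %% N)%N = lag N y t1 by [].
have e5 : ((y + N - t2) %% N)%N = lag N t2 y by [].
have e6 : ((x + N - y) %% N)%N = lag N y x by [].
have e7 : ((y + N - x) %% N)%N = lag N x y by [].
rewrite e1 e2 e3 e4 e5 e6 e7.
rewrite (@lag_shift N y t1 t1) // (@lag_shift N t2 y t1) // (@lag_shift N y x t1) //.
rewrite (@lag_shift N x y t1) //.
have e0 : lag N t1 t1 = 0%N by rewrite /lag addKn modnn.
rewrite e0.
have := lag_lt t1 x hN; have := lag_lt t1 y hN; have := lag_lt t1 t2 hN.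
move: (lag N t1 x) (lag N t1 y) (lag N t1 t2) => X Y L hL hY hX.
rewrite !(@lag_alt 1 N erefl hN) //.
clear -hN hn hL hY hX.
repeat (case: ifPn => ?); lia.
Qed.

Section Recip.
Variable R : realType.
Variables m N n : nat.
Hypotheses (hm : (0 < m)%N) (hN : (0 < N)%N) (hn : (1 <= n)%N).

Lemma delta_supp (P : pred nat) (j : 'I_(m * N)) :
  P (j %/ m)%N -> supp P (delta_mx j 0 : 'cV[R]_(m * N)).
Proof.
move=> hj k; rewrite mxE andbT; have [->//|ne] := eqVneq k j. by rewrite eqxx.
Qed.

Lemma recip (S : 'M[R]_(m * N)) : posdef S -> banded m N n (invmx S) ->
  reciprocal m N n S.
Proof.
move=> pS hb t1 t2 ht1 ht2 a b pa pb sa sb spa spb hra hrb.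
have uS := posdef_unit pS; case: (pS) => sS pS'.
set K := invmx S.
have sK : K^T = K by rewrite /K trmx_inv sS.
set Ipr := in_interval N t1 t2; set Opr := outside_interval N t1 t2.
set Cpr := boundary N n t1 t2.
set ra := a - pa; set rb := b - pb; set v := S *m rb.
have vC : forall j : 'I_(m * N), Cpr (j %/ m)%N -> v j 0 = 0.
  move=> j hj; have := hrb _ (delta_supp hj).
  rewrite /inner -/(bf S rb _) (@bf_sym _ _ S) // /bf trmx_delta -mulmxA -rowE mxE.
  done.
have rbA : forall i : 'I_(m * N), Ipr (i %/ m)%N -> ~~ Cpr (i %/ m)%N -> rb i 0 = 0.
  move=> i hi hc; rewrite !mxE.
  have -> : b i 0 = 0.
    apply/eqP; apply: contraT => /sb; by rewrite /Opr /outside_interval -/Ipr hi andbF.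
  have -> : pb i 0 = 0.
    apply/eqP; apply: contraT => /spb h; by move: hc; rewrite /Cpr h.
  by rewrite subr0.
set Aset := fun i : 'I_(m * N) => Ipr (i %/ m)%N && ~~ Cpr (i %/ m)%N.
set w : 'cV[R]_(m * N) := \col_i (if Aset i then v i 0 else 0).
have Kv : K *m v = rb by rewrite /v mulmxA mulVmx // mul1mx.
have rowsum : forall i, Aset i -> \sum_j K i j * w j 0 = 0.
  move=> i /andP[hi hc].
  transitivity ((K *m v) i 0); last by rewrite Kv rbA.
  rewrite [RHS]mxE; apply: eq_bigr => j _; rewrite mxE.
  case: ifPn => // hAj.
  case: (boolP (Cpr (j %/ m)%N)) => hCj; first by rewrite vC // mulr0.
  have hIj : ~~ Ipr (j %/ m)%N by move: hAj; rewrite /Aset hCj andbT.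
  have far := geo hN hn ht1 ht2 (@blk_lt m N hm hN i) (@blk_lt m N hm hN j) hi hIj hCj.
  by rewrite (hb _ _ far) !mul0r.
have w0 : w = 0.
  apply/eqP; apply: contraT => nw.
  have : bf K w w = 0.
    rewrite bfE; apply: big1 => i _.
    under eq_bigr do rewrite -mulrA.
    rewrite -mulr_sumr.
    case: (boolP (Aset i)) => hA; first by rewrite rowsum // mulr0.
    by rewrite mxE (negbTE hA) mul0r.
  have -> : bf K w w = bf S (K *m w) (K *m w).
    rewrite /bf trmx_mul sK -!mulmxA (mulmxA S) mulmxV // mul1mx.
    by rewrite mulmxA.
  have : K *m w != 0.
    apply: contra nw => /eqP h.
    by rewrite -(mul1mx w) -(mulmxV uS) -mulmxA h mulmx0.
  move=> /pS' h1 h2; by move: h1; rewrite -/(bf S _ _) h2 ltxx.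
rewrite /inner /bf -mulmxA -/v mxE; apply: big1 => i _; rewrite mxE.
case: (boolP (Aset i)) => hA.
  have : w i 0 = 0 by rewrite w0 mxE.
  by rewrite mxE hA => ->; rewrite mulr0.
case: (boolP (Cpr (i %/ m)%N)) => hC; first by rewrite vC // mulr0.
have hI : ~~ Ipr (i %/ m)%N by move: hA; rewrite /Aset hC andbT.
rewrite !mxE.
have -> : a i 0 = 0 by apply/eqP; apply: contraT => /sa h; move: hI; rewrite /Ipr h.
have -> : pa i 0 = 0 by apply/eqP; apply: contraT => /spa h; move: hC; rewrite /Cpr h.
by rewrite subr0 mul0r.
Qed.

End Recip.

End PartE.
Import PartE.

Theorem theorem7 (R : realType) (m n N : nat) (S : nat -> 'M[R]_m)
    (SigO : 'M[R]_(m * N)) :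
  (1 <= m)%N -> (1 <= n)%N -> (2 * n < N)%N ->
  MEP_minimizer m n N S SigO ->
  ((invmx SigO)^T = invmx SigO /\
   (@Umat R m N)^T *m invmx SigO *m @Umat R m N = invmx SigO /\
   banded m N n (invmx SigO)) /\
  (posdef SigO /\ (@Umat R m N)^T *m SigO *m @Umat R m N = SigO /\
   reciprocal m N n SigO).
Proof.
move=> hm hn h2 [[pS [hE hU]] hmin].
have hN : (0 < N)%N by lia.
have hnN : (n < N)%N by lia.
have hmN : (0 < m * N)%N by rewrite muln_gt0 hm.
have uS := posdef_unit pS.
have sS : SigO^T = SigO by case: pS.
rewrite (Umat_perm hm hN) in hU *.
have cK := circ_inv uS hU.
have sK : (invmx SigO)^T = invmx SigO by rewrite trmx_inv sS.
have hK := circ_of cK.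
have band : banded m N n (invmx SigO).
  move=> k l hkl.
  have [d d0 hd] := posdef_perturb pS (Dm_sym R k l).
  have hopt : forall t, `|t| < d -> \det (SigO + t *: Dm R k l) <= \det SigO.
    move=> t ht; have pt := hd t ht.
    have feas : MEP_feasible m n N S (SigO + t *: Dm R k l).
      split; first exact: pt.
      split.
        rewrite mulmxDr mulmxDl -scalemxAr -scalemxAl.
        by rewrite (Dm_corner hm hN R hnN h2 hkl) scaler0 addr0.
      rewrite (Umat_perm hm hN) mulmxDr mulmxDl -scalemxAr -scalemxAl.
      by rewrite hU (Dm_circ hm hN R k l).
    have := hmin _ feas; rewrite lerN2.
    have p1 := posdef_det_gt0 pS; have p2 := posdef_det_gt0 pt.
    by rewrite ler_ln // posrE.
  have := opt_trace hmN pS d0 hopt.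
  rewrite (trace_Dm k l sK hK) => /eqP; rewrite mulf_eq0 => /orP[/eqP //|].
  by rewrite gt_eqF // sum_Dm_gt0.
split; first by split.
split; first exact: pS.
split; first exact: hU.
exact: (@recip R m N n hm hN hn SigO pS band).
Qed.
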